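(* Let $\nu,a,b\in\mathbb{R}$ with $0<b+\nu<(a+\nu)/4$. Let $u^*$ be the unique solution in $b<u<a$ of $\lambda_2(a,u,b)=\lambda_3(a,u,b)$, and put $\alpha=\lambda_2(a,u^*,b)$. Then the equation $x/t=\lambda_2(a,u_2,b)$ can be inverted to give $u_2\in[u^*,a]$ as an increasing function of $x/t$ on the interval $\alpha\le x/t\le 2a+b+2\nu$.
   Context: For $-\nu<u_3<u_2<u_1$ define $$I(u_1,u_2,u_3)=\int_{u_3}^{u_2}\frac{\eta+\nu}{\sqrt{(\eta+\nu)(u_1-\eta)(u_2-\eta)(\eta-u_3)}}\,d\eta,$$ and for $i=1,2,3$ $$\lambda_i=u_1+u_2+u_3+2\nu-\frac{I}{\partial I/\partial u_i}.$$ These functions extend continuously to $u_1=u_2>u_3$, where $\lambda_2=2u_1+u_3+2\nu$. *)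

(* Defs.v *)
From Stdlib Require Import Reals.
From Coquelicot Require Import Coquelicot.
Open Scope R_scope.

Definition integrand (nu u1 u2 u3 eta : R) : R :=
  (eta + nu) / sqrt ((eta + nu) * (u1 - eta) * (u2 - eta) * (eta - u3)).

Definition Ifun (nu u1 u2 u3 : R) : R :=
  RInt_gen (integrand nu u1 u2 u3) (at_right u3) (at_left u2).

Definition dI1 (nu u1 u2 u3 : R) : R := Derive (fun v => Ifun nu v u2 u3) u1.
Definition dI2 (nu u1 u2 u3 : R) : R := Derive (fun v => Ifun nu u1 v u3) u2.
Definition dI3 (nu u1 u2 u3 : R) : R := Derive (fun v => Ifun nu u1 u2 v) u3.

Definition lambda1 (nu u1 u2 u3 : R) : R :=
  u1 + u2 + u3 + 2 * nu - Ifun nu u1 u2 u3 / dI1 nu u1 u2 u3.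
Definition lambda2 (nu u1 u2 u3 : R) : R :=
  u1 + u2 + u3 + 2 * nu - Ifun nu u1 u2 u3 / dI2 nu u1 u2 u3.
Definition lambda3 (nu u1 u2 u3 : R) : R :=
  u1 + u2 + u3 + 2 * nu - Ifun nu u1 u2 u3 / dI3 nu u1 u2 u3.

(* lambda_2 continuously extended to u1 = u2 > u3, where it equals 2u1+u3+2nu. *)
Definition lambda2e (nu u1 u2 u3 : R) : R :=
  if Req_EM_T u2 u1 then 2 * u1 + u3 + 2 * nu else lambda2 nu u1 u2 u3.

(* Main.v *)
Require Import Defs.
From Stdlib Require Import Reals Lra Psatz ClassicalEpsilon.
From Coquelicot Require Import Coquelicot.
Open Scope R_scope.

Definition Fh (nu a x : R) := sqrt (x+nu) / sqrt (a - x).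
Definition F1 (nu a x : R) := (a+nu) / (2 * sqrt(x+nu) * sqrt(a-x) * (a-x)).
Definition F2 (nu a x : R) :=
  (a+nu)*(4*(x+nu) - (a+nu)) / (4*(x+nu)*((a-x)*(a-x))*sqrt(x+nu)*sqrt(a-x)).

Ltac sqfix := repeat match goal with |- context [?a + - ?x] => replace (a + - x) with (a - x) by ring end.

Lemma Fh_deriv nu a x : -nu < x < a -> is_derive (Fh nu a) x (F1 nu a x).
Proof.
  intros [h1 h2]. unfold Fh, F1.
  assert (p1 : 0 < x + nu) by lra. assert (p2 : 0 < a - x) by lra.
  assert (s1 := sqrt_lt_R0 _ p1). assert (s2 := sqrt_lt_R0 _ p2).
  assert (e1 := sqrt_sqrt _ (Rlt_le _ _ p1)). assert (e2 := sqrt_sqrt _ (Rlt_le _ _ p2)).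
  auto_derive; sqfix. { repeat split; try lra. }
  set (q1 := sqrt (x+nu)) in *. set (q2 := sqrt (a-x)) in *.
  replace (a+nu) with (q1*q1 + q2*q2) by lra. rewrite <- e2. field. lra.
Qed.

Lemma F1_deriv nu a x : -nu < x < a -> is_derive (F1 nu a) x (F2 nu a x).
Proof.
  intros [h1 h2]. unfold F1, F2.
  assert (p1 : 0 < x + nu) by lra. assert (p2 : 0 < a - x) by lra.
  assert (s1 := sqrt_lt_R0 _ p1). assert (s2 := sqrt_lt_R0 _ p2).
  assert (e1 := sqrt_sqrt _ (Rlt_le _ _ p1)). assert (e2 := sqrt_sqrt _ (Rlt_le _ _ p2)).
  auto_derive; sqfix. { repeat split; try lra. apply Rgt_not_eq. 
     apply Rmult_lt_0_compat; [|lra]. apply Rmult_lt_0_compat; [|lra]. lra. }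
  set (q1 := sqrt (x+nu)) in *. set (q2 := sqrt (a-x)) in *.
  replace (x+nu) with (q1*q1) by lra. replace (a-x) with (q2*q2) by lra.
  replace (a+nu) with (q1*q1 + q2*q2) by lra.
  field. lra.
Qed.

Lemma cont2d_K (K : R -> R) x t : continuous K t -> continuity_2d_pt (fun _ v => K v) x t.
Proof.
  intros HK. apply (continuity_1d_2d_pt_comp K (fun _ v => v)).
  apply continuity_pt_filterlim; exact HK. apply continuity_2d_pt_id2.
Qed.

Lemma eta_in (lo hi m z k : R) : lo < m < hi -> lo < z < hi -> 0 <= k <= 1 ->
  lo < m + (z - m) * k < hi.
Proof. intros H1 H2 [k0 k1].
  destruct (Rle_lt_dec m z).
  - assert (0 <= (z-m)*k) by nra. assert ((z-m)*k <= z - m) by nra. lra.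
  - assert ((z-m)*k <= 0) by nra. assert (z - m <= (z-m)*k) by nra. lra. Qed.

Lemma is_derive_Req (f : R -> R) x l l' : is_derive f x l -> l = l' -> is_derive f x l'.
Proof. intros H ->; auto. Qed.

Lemma scalR (x y : R) : scal x y = x * y.
Proof. reflexivity. Qed.

Lemma cont_of_pt (f : R -> R) x : continuity_pt f x -> continuous f x.
Proof. intros H. apply continuity_pt_filterlim; exact H. Qed.
Lemma pt_of_cont (f : R -> R) x : continuous f x -> continuity_pt f x.
Proof. intros H. apply continuity_pt_filterlim; exact H. Qed.

Lemma deriv_cont (f : R -> R) x l : is_derive f x l -> continuity_pt f x.
Proof. intros H. apply pt_of_cont. apply (ex_derive_continuous (K:=R_AbsRing) (V:=R_NormedModule)). exists l. exact H. Qed.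

Lemma pderiv (h dh w K : R -> R) (lo hi m z0 : R) :
  lo < m < hi -> lo < z0 < hi ->
  (forall y, lo < y < hi -> is_derive h y (dh y)) ->
  (forall y, lo < y < hi -> continuous dh y) ->
  (forall t, continuous w t) -> (forall t, continuous K t) -> (forall t, 0 <= K t <= 1) ->
  is_derive (fun z => RInt (fun t => h (m + (z-m)*K t) * w t) 0 (PI/2)) z0
     (RInt (fun t => dh (m + (z0-m)*K t) * K t * w t) 0 (PI/2)).
Proof.
  intros Hm Hz Hd Hdc Hw HK HK1.
  assert (Hr : 0 < Rmin (z0 - lo) (hi - z0)) by (apply Rmin_glb_lt; lra).
  set (r := mkposreal _ Hr).
  assert (Hloc : forall z, Rabs (z - z0) < r -> lo < z < hi).
  { intros z Hz'. simpl in Hz'. apply Rabs_lt_between in Hz'.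
    assert (Rmin (z0 - lo) (hi - z0) <= z0 - lo) by apply Rmin_l.
    assert (Rmin (z0 - lo) (hi - z0) <= hi - z0) by apply Rmin_r. lra. }
  assert (HD : forall z t, lo < z < hi ->
     is_derive (fun u => h (m + (u-m)*K t) * w t) z (dh (m + (z-m)*K t) * K t * w t)).
  { intros z t Hzz.
    assert (H1 := Hd _ (eta_in lo hi m z (K t) Hm Hzz (HK1 t))).
    assert (Hi: is_derive (fun u => m + (u-m)*K t) z (K t)) by (auto_derive; [exact I| ring]).
    assert (H3 := is_derive_comp h (fun u => m + (u-m)*K t) z _ _ H1 Hi).
    assert (H4 := is_derive_scal_l _ _ _ (w t) H3).
    apply is_derive_Req with (l := scal (scal (K t) (dh (m + (z-m)*K t))) (w t)).
    { eapply is_derive_ext; [|exact H4]. intros u. reflexivity. }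
    change (@eq R ((K t * dh (m + (z-m)*K t)) * w t) (dh (m + (z - m) * K t) * K t * w t)); ring. }
  assert (Hcont : forall z, lo < z < hi -> forall t, continuous (fun t => h (m + (z-m)*K t) * w t) t).
  { intros z Hzz t. apply cont_of_pt. apply continuity_pt_mult; [|apply pt_of_cont, Hw].
    apply (continuity_pt_comp (fun t => m + (z-m)*K t) h).
    apply continuity_pt_plus. apply continuity_pt_const. intros ??; reflexivity.
    apply continuity_pt_mult. apply continuity_pt_const. intros ??; reflexivity. apply pt_of_cont, HK.
    eapply deriv_cont. apply Hd. apply eta_in; auto. }
  assert (HDer : forall z t, lo < z < hi ->
     Derive (fun u => h (m + (u-m)*K t) * w t) z = dh (m + (z-m)*K t) * K t * w t).
  { intros. apply is_derive_unique. apply HD; auto. }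
  replace (RInt (fun t => dh (m + (z0-m)*K t) * K t * w t) 0 (PI/2))
    with (RInt (fun t => Derive (fun u => h (m + (u-m)*K t) * w t) z0) 0 (PI/2)).
  2:{ apply RInt_ext. intros; apply HDer; auto. }
  apply (is_derive_RInt_param (fun u t => h (m + (u-m)*K t) * w t)).
  - exists r. intros z Hzz t _. eexists. apply HD. apply Hloc. exact Hzz.
  - intros t _.
    apply continuity_2d_pt_ext_loc with (f := fun u v => dh (m + (u-m)*K v) * K v * w v).
    { exists r. intros u v Hu _. symmetry. apply HDer. apply Hloc; auto. }
    apply continuity_2d_pt_mult. apply continuity_2d_pt_mult.
    + apply (continuity_1d_2d_pt_comp dh (fun u v => m + (u-m)*K v)).
      apply continuity_pt_filterlim. apply Hdc. apply eta_in; auto.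
      apply continuity_2d_pt_plus. apply continuity_2d_pt_const.
      apply continuity_2d_pt_mult. apply continuity_2d_pt_minus. apply continuity_2d_pt_id1.
      apply continuity_2d_pt_const. apply cont2d_K; auto.
    + apply cont2d_K; auto.
    + apply cont2d_K; auto.
  - exists r. intros z Hzz. apply (ex_RInt_continuous (V:=R_CompleteNormedModule)). intros; apply Hcont. apply Hloc; exact Hzz.
Qed.

Ltac req := match goal with |- ?x = ?y => change (@eq R x y) end; ring.

Definition S (t : R) := sin t ^ 2.
Definition C (t : R) := cos t ^ 2.

Lemma SC1 t : S t + C t = 1.
Proof. unfold S, C. rewrite <- (sin2_cos2 t). unfold Rsqr; ring. Qed.
Lemma S01 t : 0 <= S t <= 1.
Proof. assert (H := SC1 t). unfold S, C in *. split; nra. Qed.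
Lemma C01 t : 0 <= C t <= 1.
Proof. assert (H := SC1 t). unfold S, C in *. split; nra. Qed.

Lemma exd_cont (f : R -> R) x : ex_derive f x -> continuous f x.
Proof. intros [l H]. apply cont_of_pt. eapply deriv_cont; eauto. Qed.

Lemma S_cont t : continuous S t.
Proof. apply exd_cont. unfold S. auto_derive. exact I. Qed.
Lemma C_cont t : continuous C t.
Proof. apply exd_cont. unfold C. auto_derive. exact I. Qed.

Lemma F1_cont nu a y : -nu < y < a -> continuous (F1 nu a) y.
Proof. intros H. apply exd_cont. exists (F2 nu a y). apply F1_deriv; auto. Qed.
Lemma Fh_cont nu a y : -nu < y < a -> continuous (Fh nu a) y.
Proof. intros H. apply exd_cont. exists (F1 nu a y). apply Fh_deriv; auto. Qed.
Lemma F2_cont nu a y : -nu < y < a -> continuous (F2 nu a) y.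
Proof. intros [h1 h2]. apply exd_cont. unfold F2.
  assert (p1 : 0 < y + nu) by lra. assert (p2 : 0 < a - y) by lra.
  assert (s1 := sqrt_lt_R0 _ p1). assert (s2 := sqrt_lt_R0 _ p2).
  auto_derive. sqfix. repeat split; try lra.
  apply Rgt_not_eq. repeat apply Rmult_lt_0_compat; lra.
Qed.

Definition eta (u v t : R) := v + (u - v) * S t.
Definition Jf nu a u v : R := RInt (fun t => Fh nu a (eta u v t) * 2) 0 (PI/2).
Definition J2f nu a u v : R := RInt (fun t => F1 nu a (eta u v t) * (2 * S t)) 0 (PI/2).
Definition J3f nu a u v : R := RInt (fun t => F1 nu a (eta u v t) * (2 * C t)) 0 (PI/2).
Definition J22f nu a u v : R := RInt (fun t => F2 nu a (eta u v t) * (2 * S t * S t)) 0 (PI/2).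
Definition J23f nu a u v : R := RInt (fun t => F2 nu a (eta u v t) * (2 * S t * C t)) 0 (PI/2).

Lemma cont_const2 t : continuous (fun _ : R => 2) t.
Proof. apply cont_of_pt. apply continuity_pt_const. intros ??; reflexivity. Qed.
Lemma cont_2S t : continuous (fun t => 2 * S t) t.
Proof. apply exd_cont. unfold S. auto_derive. exact I. Qed.
Lemma cont_2C t : continuous (fun t => 2 * C t) t.
Proof. apply exd_cont. unfold C. auto_derive. exact I. Qed.

Lemma J_du nu a u v : -nu < u < a -> -nu < v < a ->
  is_derive (fun z => Jf nu a z v) u (J2f nu a u v).
Proof.
  intros Hu Hv. unfold Jf, J2f, eta.
  eapply is_derive_Req.
  apply (pderiv (Fh nu a) (F1 nu a) (fun _ => 2) S (-nu) a v u); auto.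
  intros; apply Fh_deriv; auto. intros; apply F1_cont; auto. apply cont_const2. apply S_cont. apply S01.
  apply RInt_ext. intros; req.
Qed.

Lemma J2_du nu a u v : -nu < u < a -> -nu < v < a ->
  is_derive (fun z => J2f nu a z v) u (J22f nu a u v).
Proof.
  intros Hu Hv. unfold J2f, J22f, eta.
  eapply is_derive_Req.
  apply (pderiv (F1 nu a) (F2 nu a) (fun t => 2 * S t) S (-nu) a v u); auto.
  intros; apply F1_deriv; auto. intros; apply F2_cont; auto. apply cont_2S. apply S_cont. apply S01.
  apply RInt_ext. intros; req.
Qed.

Lemma J3_du nu a u v : -nu < u < a -> -nu < v < a ->
  is_derive (fun z => J3f nu a z v) u (J23f nu a u v).
Proof.
  intros Hu Hv. unfold J3f, J23f, eta.
  eapply is_derive_Req.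
  apply (pderiv (F1 nu a) (F2 nu a) (fun t => 2 * C t) S (-nu) a v u); auto.
  intros; apply F1_deriv; auto. intros; apply F2_cont; auto. apply cont_2C. apply S_cont. apply S01.
  apply RInt_ext. intros; req.
Qed.

Lemma eta_alt u v t : eta u v t = u + (v - u) * C t.
Proof. unfold eta. assert (H := SC1 t). replace (S t) with (1 - C t) by lra. ring. Qed.

Lemma J_dv nu a u v : -nu < u < a -> -nu < v < a ->
  is_derive (fun z => Jf nu a u z) v (J3f nu a u v).
Proof.
  intros Hu Hv. unfold Jf, J3f.
  apply is_derive_ext with (f := fun z => RInt (fun t => Fh nu a (u + (z-u)*C t) * 2) 0 (PI/2)).
  { intros z. apply RInt_ext. intros. rewrite eta_alt. reflexivity. }
  eapply is_derive_Req.
  apply (pderiv (Fh nu a) (F1 nu a) (fun _ => 2) C (-nu) a u v); auto.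
  intros; apply Fh_deriv; auto. intros; apply F1_cont; auto. apply cont_const2. apply C_cont. apply C01.
  apply RInt_ext. intros; rewrite eta_alt; req.
Qed.

Lemma integrand_sub nu a u v th : -nu < v -> v < u -> u < a -> 0 < th < PI/2 ->
  (u - v) * (2 * sin th * cos th) * integrand nu a u v (eta u v th) = Fh nu a (eta u v th) * 2.
Proof.
  intros h1 h2 h3 hth.
  assert (sp : 0 < sin th) by (apply sin_gt_0; lra).
  assert (cp : 0 < cos th) by (apply cos_gt_0; lra).
  assert (HS := SC1 th). unfold S, C in HS.
  assert (Hs : 0 < S th < 1). { unfold S. split; nra. }
  assert (He : v < eta u v th < u). { unfold eta. split; nra. }
  set (e := eta u v th) in *.
  assert (p1 : 0 < e + nu) by lra. assert (p2 : 0 < a - e) by lra.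
  assert (s1 := sqrt_lt_R0 _ p1). assert (s2 := sqrt_lt_R0 _ p2).
  assert (e1 := sqrt_sqrt _ (Rlt_le _ _ p1)). assert (e2 := sqrt_sqrt _ (Rlt_le _ _ p2)).
  assert (Hue : u - e = (u - v) * cos th ^ 2). { unfold e, eta, S. replace (sin th ^ 2) with (1 - cos th ^ 2) by lra. ring. }
  assert (Hev : e - v = (u - v) * sin th ^ 2). { unfold e, eta, S. ring. }
  unfold integrand, Fh.
  rewrite (sqrt_lem_1 ((e + nu) * (a - e) * (u - e) * (e - v))
     (sqrt (e+nu) * sqrt (a-e) * ((u-v) * sin th * cos th))).
  2:{ rewrite Hue, Hev. apply Rmult_le_pos; [|nra]. apply Rmult_le_pos; [|nra]. apply Rmult_le_pos; lra. }
  2:{ apply Rmult_le_pos. apply Rmult_le_pos; lra. apply Rmult_le_pos; [|lra]. apply Rmult_le_pos; lra. }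
  2:{ rewrite Hue, Hev. transitivity ((sqrt (e+nu) * sqrt (e+nu)) * (sqrt (a-e) * sqrt (a-e)) * ((u-v)*(u-v)) * (sin th * sin th * (cos th * cos th))); [ring|].
      rewrite e1, e2. ring. }
  set (q1 := sqrt (e+nu)) in *. set (q2 := sqrt (a-e)) in *.
  replace (e+nu) with (q1*q1) by lra. field. repeat split; lra.
Qed.

Definition Th (u v x : R) := asin (sqrt ((x - v) / (u - v))).

Lemma asin_pos w : 0 < w < 1 -> 0 < asin w < PI/2.
Proof.
  intros Hw. assert (H := asin_bound_lt w ltac:(lra)).
  split; [|lra].
  destruct (Rle_lt_dec (asin w) 0) as [Hle|]; [|lra].
  assert (sin (asin w) <= 0).
  { destruct (Req_dec (asin w) 0) as [E|E]. rewrite E, sin_0; lra.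
    assert (sin (- asin w) > 0) by (apply sin_gt_0; [lra| pose proof PI_RGT_0; lra]).
    rewrite sin_neg in H0. lra. }
  rewrite sin_asin in H0; lra.
Qed.

Lemma Th_prop u v x : v < u -> v < x < u -> 0 < Th u v x < PI/2 /\ eta u v (Th u v x) = x.
Proof.
  intros h1 h2. unfold Th.
  assert (q : 0 < (x - v) / (u - v) < 1).
  { split. apply Rdiv_lt_0_compat; lra. apply Rmult_lt_reg_r with (u - v). lra.
    unfold Rdiv. rewrite Rmult_assoc, Rinv_l; lra. }
  assert (sq : 0 < sqrt ((x - v) / (u - v)) < 1).
  { split. apply sqrt_lt_R0; lra. rewrite <- sqrt_1. apply sqrt_lt_1; lra. }
  split. apply asin_pos; auto.
  unfold eta, S. rewrite sin_asin by lra. simpl. rewrite Rmult_1_r, sqrt_sqrt by lra.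
  field. lra.
Qed.

Lemma integrand_cont nu a u v z : -nu < v -> v < z < u -> u < a -> continuous (integrand nu a u v) z.
Proof.
  intros h1 h2 h3. apply exd_cont. unfold integrand.
  assert (P : 0 < (z + nu) * (a - z) * (u - z) * (z - v)).
  { repeat apply Rmult_lt_0_compat; lra. }
  auto_derive. repeat split; auto. apply Rgt_not_eq. apply sqrt_lt_R0. auto.
Qed.

Definition Hfun nu a u v t := Fh nu a (eta u v t) * 2.

Lemma piece nu a u v x y : -nu < v -> v < u -> u < a -> v < x < u -> v < y < u ->
  is_RInt (integrand nu a u v) x y (RInt (Hfun nu a u v) (Th u v x) (Th u v y)).
Proof.
  intros h1 h2 h3 hx hy.
  destruct (Th_prop u v x h2 hx) as [tx ex]. destruct (Th_prop u v y h2 hy) as [ty ey].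
  assert (Hin : forall t, Rmin (Th u v x) (Th u v y) <= t <= Rmax (Th u v x) (Th u v y) -> 0 < t < PI/2).
  { intros t [ht1 ht2]. split.
    apply Rlt_le_trans with (Rmin (Th u v x) (Th u v y)); auto. apply Rmin_glb_lt; lra.
    apply Rle_lt_trans with (Rmax (Th u v x) (Th u v y)); auto. apply Rmax_lub_lt; lra. }
  assert (Heta : forall t, 0 < t < PI/2 -> v < eta u v t < u).
  { intros t ht. assert (sp : 0 < sin t) by (apply sin_gt_0; lra).
    assert (cp : 0 < cos t) by (apply cos_gt_0; lra).
    assert (HS := SC1 t). unfold S, C in HS.
    assert (0 < sin t ^ 2) by nra. assert (0 < cos t ^ 2) by nra.
    unfold eta, S. split; nra. }
  assert (HA : forall t, Rmin (Th u v x) (Th u v y) <= t <= Rmax (Th u v x) (Th u v y) ->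
     continuous (integrand nu a u v) (eta u v t)).
  { intros t ht. apply integrand_cont; try lra; apply Heta, Hin, ht. }
  assert (HB : forall t, Rmin (Th u v x) (Th u v y) <= t <= Rmax (Th u v x) (Th u v y) ->
     is_derive (eta u v) t ((u - v) * (2 * sin t * cos t)) /\
     continuous (fun t => (u - v) * (2 * sin t * cos t)) t).
  { intros t ht. split. unfold eta, S. auto_derive. exact I. ring.
    apply exd_cont. auto_derive. exact I. }
  assert (comp := is_RInt_comp (V := R_CompleteNormedModule) (integrand nu a u v) (eta u v)
     (fun t => (u - v) * (2 * sin t * cos t)) (Th u v x) (Th u v y) HA HB).
  rewrite ex, ey in comp.
  assert (E : RInt (integrand nu a u v) x y = RInt (Hfun nu a u v) (Th u v x) (Th u v y)).
  { symmetry. rewrite <- (is_RInt_unique _ _ _ _ comp).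
    apply RInt_ext. intros t ht. unfold Hfun. rewrite <- integrand_sub; auto.
    apply Hin. split; apply Rlt_le; apply ht. }
  rewrite <- E. apply (RInt_correct (V := R_CompleteNormedModule)).
  apply (ex_RInt_continuous (V := R_CompleteNormedModule)).
  intros z [hz1 hz2]. apply integrand_cont; auto. split.
  apply Rlt_le_trans with (Rmin x y); auto. apply Rmin_glb_lt; lra.
  apply Rle_lt_trans with (Rmax x y); auto. apply Rmax_lub_lt; lra.
Qed.

Lemma ballR (x e y : R) : Rabs (y - x) < e -> ball x e y.
Proof. intros H. change (Rabs (y + - x) < e). exact H. Qed.
Lemma ballR' (x e y : R) : ball x e y -> Rabs (y - x) < e.
Proof. intros H. change (Rabs (y + - x) < e) in H. exact H. Qed.

Lemma psi_small e : 0 < e -> exists d, 0 < d /\ forall z, 0 <= z < d -> z < 1 -> 0 <= asin (sqrt z) < e.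
Proof.
  intros He.
  assert (Hc : continuity_pt (comp asin sqrt) 0).
  { apply continuity_pt_comp. apply continuity_pt_sqrt; lra.
    apply derivable_continuous_pt. rewrite sqrt_0. apply derivable_pt_asin. lra. }
  destruct (Hc e He) as [al [Hal Hal2]].
  exists al. split; [lra|]. intros z [z0 z1] z2.
  destruct (Req_dec z 0) as [E|E].
  { subst z. rewrite sqrt_0, asin_0. lra. }
  assert (Hs : 0 < sqrt z < 1). { split. apply sqrt_lt_R0; lra. rewrite <- sqrt_1. apply sqrt_lt_1; lra. }
  assert (A := asin_pos _ Hs).
  specialize (Hal2 z). simpl in Hal2. unfold R_dist, comp in Hal2.
  rewrite sqrt_0, asin_0 in Hal2.
  assert (Hd : Rabs (asin (sqrt z) - 0) < e).
  { apply Hal2. split. split. exact I. auto. rewrite Rminus_0_r, Rabs_pos_eq; lra. }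
  rewrite Rminus_0_r, Rabs_pos_eq in Hd; lra.
Qed.

Lemma Th_top u v y : v < u -> v < y < u -> PI/2 - Th u v y = asin (sqrt ((u - y)/(u - v))).
Proof.
  intros h1 h2. unfold Th.
  assert (q : 0 < (y - v) / (u - v) < 1).
  { split. apply Rdiv_lt_0_compat; lra. apply Rmult_lt_reg_r with (u - v). lra.
    unfold Rdiv. rewrite Rmult_assoc, Rinv_l; lra. }
  assert (sq : 0 < sqrt ((y - v) / (u - v)) < 1).
  { split. apply sqrt_lt_R0; lra. rewrite <- sqrt_1. apply sqrt_lt_1; lra. }
  assert (A := asin_pos _ sq).
  rewrite <- (asin_sin (PI/2 - asin (sqrt ((y - v) / (u - v))))) by lra.
  f_equal. rewrite sin_shift, cos_asin by lra.
  f_equal. unfold Rsqr. rewrite sqrt_sqrt by lra. field. lra.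
Qed.

Lemma Hfun_bound nu a u v t : -nu < v -> v < u -> u < a ->
  0 <= Hfun nu a u v t <= 2 * (sqrt (u + nu) / sqrt (a - u)).
Proof.
  intros h1 h2 h3. unfold Hfun, Fh.
  assert (Hs := S01 t).
  assert (He : v <= eta u v t <= u). { unfold eta. split; nra. }
  assert (p1 : 0 < eta u v t + nu) by lra. assert (p2 : 0 < a - eta u v t) by lra.
  assert (s1 := sqrt_lt_R0 _ p1). assert (s2 := sqrt_lt_R0 _ p2).
  assert (s3 : 0 < sqrt (a - u)) by (apply sqrt_lt_R0; lra).
  assert (m1 : sqrt (eta u v t + nu) <= sqrt (u + nu)) by (apply sqrt_le_1; lra).
  assert (m2 : sqrt (a - u) <= sqrt (a - eta u v t)) by (apply sqrt_le_1; lra).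
  split. apply Rmult_le_pos; [|lra]. apply Rlt_le, Rdiv_lt_0_compat; lra.
  rewrite (Rmult_comm 2). apply Rmult_le_compat_r; [lra|].
  unfold Rdiv. apply Rmult_le_compat; try lra. apply Rlt_le, Rinv_0_lt_compat; lra.
  apply Rinv_le_contravar; lra.
Qed.

Lemma Hfun_cont nu a u v t : -nu < v -> v < u -> u < a -> continuous (Hfun nu a u v) t.
Proof.
  intros h1 h2 h3. unfold Hfun. apply cont_of_pt. apply continuity_pt_mult.
  2:{ apply continuity_pt_const. intros ??; reflexivity. }
  apply (continuity_pt_comp (eta u v) (Fh nu a)).
  apply pt_of_cont. apply exd_cont. unfold eta, S. auto_derive. exact I.
  apply pt_of_cont. apply Fh_cont. assert (Hs := S01 t). unfold eta. split; nra.
Qed.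

Lemma exH nu a u v p q : -nu < v -> v < u -> u < a -> ex_RInt (Hfun nu a u v) p q.
Proof. intros. apply (ex_RInt_continuous (V:=R_CompleteNormedModule)). intros; apply Hfun_cont; auto. Qed.

Lemma RInt_plusR (f : R -> R) a b c : ex_RInt f a b -> ex_RInt f b c -> RInt f a b + RInt f b c = RInt f a c.
Proof. intros. apply (RInt_Chasles (V:=R_CompleteNormedModule)); auto. Qed.

Lemma H_close nu a u v p q : -nu < v -> v < u -> u < a -> 0 <= p <= PI/2 -> 0 <= q <= PI/2 ->
  Rabs (RInt (Hfun nu a u v) p q - RInt (Hfun nu a u v) 0 (PI/2)) <=
  (2 * (sqrt (u + nu) / sqrt (a - u))) * (p + (PI/2 - q)).
Proof.
  intros h1 h2 h3 hp hq. set (M := 2 * (sqrt (u + nu) / sqrt (a - u))).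
  rewrite <- (RInt_plusR _ 0 p (PI/2)) by (apply exH; auto).
  rewrite <- (RInt_plusR _ p q (PI/2)) by (apply exH; auto).
  assert (B1 : Rabs (RInt (Hfun nu a u v) 0 p) <= (p - 0) * M).
  { apply abs_RInt_le_const. lra. apply exH; auto. intros t _.
    destruct (Hfun_bound nu a u v t) as [b1 b2]; auto. rewrite Rabs_pos_eq; auto. }
  assert (B2 : Rabs (RInt (Hfun nu a u v) q (PI/2)) <= (PI/2 - q) * M).
  { apply abs_RInt_le_const. lra. apply exH; auto. intros t _.
    destruct (Hfun_bound nu a u v t) as [b1 b2]; auto. rewrite Rabs_pos_eq; auto. }
  replace (RInt (Hfun nu a u v) p q - (RInt (Hfun nu a u v) 0 p + (RInt (Hfun nu a u v) p q + RInt (Hfun nu a u v) q (PI / 2))))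
    with (- (RInt (Hfun nu a u v) 0 p + RInt (Hfun nu a u v) q (PI / 2))) by ring.
  rewrite Rabs_Ropp. eapply Rle_trans. apply Rabs_triang. nra.
Qed.

Lemma Ifun_J nu a u v : -nu < v -> v < u -> u < a -> Ifun nu a u v = Jf nu a u v.
Proof.
  intros h1 h2 h3. unfold Ifun.
  apply is_RInt_gen_unique.
  apply filterlimi_locally. intros eps.
  set (M := 2 * (sqrt (u + nu) / sqrt (a - u))).
  assert (HM : 0 <= M).
  { unfold M. apply Rmult_le_pos; [lra|]. apply Rlt_le, Rdiv_lt_0_compat; apply sqrt_lt_R0; lra. }
  assert (He : 0 < eps / (2 * (M + 1))).
  { apply Rdiv_lt_0_compat. apply cond_pos. lra. }
  destruct (psi_small _ He) as [d [Hd Hd2]].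
  assert (Hr : 0 < Rmin (u - v) (d * (u - v))) by (apply Rmin_glb_lt; nra).
  apply Filter_prod with
    (Q := fun x => v < x < u /\ (x - v) / (u - v) < d)
    (R := fun y => v < y < u /\ (u - y) / (u - v) < d).
  - exists (mkposreal _ Hr). intros x Hx Hvx. apply ballR' in Hx. simpl in Hx.
    assert (m1 := Rmin_l (u - v) (d * (u - v))). assert (m2 := Rmin_r (u - v) (d * (u - v))).
    apply Rabs_lt_between in Hx. split. lra.
    apply Rmult_lt_reg_r with (u - v). lra. unfold Rdiv. rewrite Rmult_assoc, Rinv_l; lra.
  - exists (mkposreal _ Hr). intros y Hy Hvy. apply ballR' in Hy. simpl in Hy.
    assert (m1 := Rmin_l (u - v) (d * (u - v))). assert (m2 := Rmin_r (u - v) (d * (u - v))).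
    apply Rabs_lt_between in Hy. split. lra.
    apply Rmult_lt_reg_r with (u - v). lra. unfold Rdiv. rewrite Rmult_assoc, Rinv_l; lra.
  - intros x y [Hx Hxd] [Hy Hyd]. simpl.
    exists (RInt (Hfun nu a u v) (Th u v x) (Th u v y)). split.
    + apply piece; auto.
    + apply ballR.
      destruct (Th_prop u v x h2 Hx) as [tx _]. destruct (Th_prop u v y h2 Hy) as [ty _].
      assert (Ex : Th u v x < eps / (2 * (M + 1))).
      { unfold Th. apply Hd2. split; auto. apply Rlt_le, Rdiv_lt_0_compat; lra.
        apply Rmult_lt_reg_r with (u - v). lra. unfold Rdiv. rewrite Rmult_assoc, Rinv_l; lra. }
      assert (Ey : PI/2 - Th u v y < eps / (2 * (M + 1))).
      { rewrite Th_top; auto. apply Hd2. split; auto. apply Rlt_le, Rdiv_lt_0_compat; lra.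
        apply Rmult_lt_reg_r with (u - v). lra. unfold Rdiv. rewrite Rmult_assoc, Rinv_l; lra. }
      eapply Rle_lt_trans. apply H_close; auto; lra. fold M.
      assert (Hsum : Th u v x + (PI / 2 - Th u v y) < 2 * (eps / (2 * (M + 1)))) by lra.
      assert (0 < eps) by apply cond_pos.
      apply Rle_lt_trans with ((M+1) * (Th u v x + (PI / 2 - Th u v y))). nra.
      apply Rlt_le_trans with ((M+1) * (2 * (eps / (2 * (M + 1))))).
      apply Rmult_lt_compat_l; lra. right; field; lra.
Qed.

Lemma cont_mult (f g : R -> R) t : continuous f t -> continuous g t -> continuous (fun t => f t * g t) t.
Proof. intros. apply cont_of_pt. apply continuity_pt_mult; apply pt_of_cont; auto. Qed.
Lemma cont_plus (f g : R -> R) t : continuous f t -> continuous g t -> continuous (fun t => f t + g t) t.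
Proof. intros. apply cont_of_pt. apply continuity_pt_plus; apply pt_of_cont; auto. Qed.
Lemma cont_cst (c t : R) : continuous (fun _ => c) t.
Proof. apply cont_of_pt. apply continuity_pt_const. intros ??; reflexivity. Qed.
Lemma cont_sin t : continuous sin t.
Proof. apply exd_cont. auto_derive. exact I. Qed.
Lemma cont_cos t : continuous cos t.
Proof. apply exd_cont. auto_derive. exact I. Qed.

Lemma eta_dom nu a u v t : -nu < v -> v < u -> u < a -> -nu < eta u v t < a /\ v <= eta u v t <= u.
Proof. intros. assert (Hs := S01 t). unfold eta. split; split; nra. Qed.

Lemma cont_comp_eta (f : R -> R) nu a u v t : -nu < v -> v < u -> u < a ->
  (forall y, -nu < y < a -> continuous f y) -> continuous (fun t => f (eta u v t)) t.
Proof.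
  intros h1 h2 h3 Hf. apply cont_of_pt.
  apply (continuity_pt_comp (eta u v) f).
  apply pt_of_cont. apply exd_cont. unfold eta, S. auto_derive. exact I.
  apply pt_of_cont. apply Hf. apply eta_dom; auto.
Qed.

Lemma exR (f : R -> R) a b : (forall t, continuous f t) -> ex_RInt f a b.
Proof. intros H. apply (ex_RInt_continuous (V:=R_CompleteNormedModule)). intros; apply H. Qed.

Lemma RInt_lin (f g : R -> R) al be a b : ex_RInt f a b -> ex_RInt g a b ->
  RInt (fun t => al * f t + be * g t) a b = al * RInt f a b + be * RInt g a b.
Proof.
  intros Hf Hg. apply is_RInt_unique.
  apply (RInt_correct (V:=R_CompleteNormedModule)) in Hf.
  apply (RInt_correct (V:=R_CompleteNormedModule)) in Hg.
  apply (is_RInt_scal _ _ _ al) in Hf. apply (is_RInt_scal _ _ _ be) in Hg.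
  assert (H := is_RInt_plus _ _ _ _ _ _ Hf Hg).
  exact H.
Qed.

Definition Ef nu a u v : R := RInt (fun t => F2 nu a (eta u v t) * (S t * C t)) 0 (PI/2).

Lemma cF1 nu a u v t : -nu < v -> v < u -> u < a -> continuous (fun t => F1 nu a (eta u v t)) t.
Proof. intros. apply (cont_comp_eta _ nu a); auto. intros; apply F1_cont; auto. Qed.
Lemma cF2 nu a u v t : -nu < v -> v < u -> u < a -> continuous (fun t => F2 nu a (eta u v t)) t.
Proof. intros. apply (cont_comp_eta _ nu a); auto. intros; apply F2_cont; auto. Qed.
Lemma cFh nu a u v t : -nu < v -> v < u -> u < a -> continuous (fun t => Fh nu a (eta u v t)) t.
Proof. intros. apply (cont_comp_eta _ nu a); auto. intros; apply Fh_cont; auto. Qed.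

Lemma IBP nu a u v : -nu < v -> v < u -> u < a ->
  J2f nu a u v - J3f nu a u v = 4 * (u - v) * Ef nu a u v.
Proof.
  intros h1 h2 h3.
  set (G := fun t => F1 nu a (eta u v t) * (sin t * cos t)).
  set (dG := fun t => 2 * (u - v) * (F2 nu a (eta u v t) * (S t * C t)) + 1 * (F1 nu a (eta u v t) * (C t + -1 * S t))).
  assert (HD : forall t, is_derive G t (dG t)).
  { intros t. destruct (eta_dom nu a u v t) as [Hd _]; auto.
    assert (He : is_derive (eta u v) t ((u - v) * (2 * sin t * cos t))).
    { unfold eta, S. auto_derive. exact I. ring. }
    assert (H1 := is_derive_comp (F1 nu a) (eta u v) t _ _ (F1_deriv nu a _ Hd) He).
    assert (H2 : is_derive (fun t => sin t * cos t) t (cos t ^ 2 - sin t ^ 2)).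
    { auto_derive. exact I. ring. }
    assert (H3 := is_derive_mult _ _ t _ _ H1 H2 Rmult_comm).
    unfold G. eapply is_derive_Req. eapply is_derive_ext; [|exact H3]. intros; reflexivity.
    unfold dG, S, C. change (@eq R ((u - v) * (2 * sin t * cos t) * F2 nu a (eta u v t) * (sin t * cos t) + F1 nu a (eta u v t) * (cos t ^ 2 - sin t ^ 2)) (2 * (u - v) * (F2 nu a (eta u v t) * (sin t ^ 2 * cos t ^ 2)) + 1 * (F1 nu a (eta u v t) * (cos t ^ 2 + -1 * sin t ^ 2)))).
    ring. }
  assert (Hc : forall t, continuous dG t).
  { intros t. unfold dG. apply cont_plus; apply cont_mult; try apply cont_cst.
    apply cont_mult. apply cF2; auto. apply cont_mult. apply S_cont. apply C_cont.
    apply cont_mult. apply cF1; auto. apply cont_plus. apply C_cont.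
    apply cont_mult. apply cont_cst. apply S_cont. }
  assert (I0 := is_RInt_derive G dG 0 (PI/2) (fun t _ => HD t) (fun t _ => Hc t)).
  apply is_RInt_unique in I0.
  assert (G0 : minus (G (PI/2)) (G 0) = 0).
  { unfold G. rewrite sin_0, cos_PI2. change (@eq R (F1 nu a (eta u v (PI / 2)) * (sin (PI / 2) * 0) + - (F1 nu a (eta u v 0) * (0 * cos 0))) 0). ring. }
  assert (I1 : RInt dG 0 (PI/2) = 0) by (eapply eq_trans; [exact I0| exact G0]).
  clear I0. unfold dG in I1.
  rewrite (RInt_lin (fun t => F2 nu a (eta u v t) * (S t * C t)) (fun t => F1 nu a (eta u v t) * (C t + -1 * S t)) (2*(u-v)) 1) in I1.
  2:{ apply exR. intros t. apply cont_mult. apply cF2; auto. apply cont_mult. apply S_cont. apply C_cont. }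
  2:{ apply exR. intros t. apply cont_mult. apply cF1; auto. apply cont_plus. apply C_cont.
      apply cont_mult. apply cont_cst. apply S_cont. }
  set (g := fun t => F1 nu a (eta u v t) * (C t + -1 * S t)) in *.
  assert (cg : forall t, continuous g t).
  { intros t. unfold g. apply cont_mult. apply cF1; auto. apply cont_plus. apply C_cont.
    apply cont_mult. apply cont_cst. apply S_cont. }
  assert (K : J2f nu a u v - J3f nu a u v = -2 * RInt g 0 (PI/2) + 0 * RInt g 0 (PI/2)).
  { unfold J2f, J3f.
    transitivity (1 * RInt (fun t => F1 nu a (eta u v t) * (2 * S t)) 0 (PI/2) + (-1) * RInt (fun t => F1 nu a (eta u v t) * (2 * C t)) 0 (PI/2)); [ring|].
    rewrite <- RInt_lin. rewrite <- RInt_lin.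
    apply RInt_ext. intros t _. unfold g. req.
    apply exR; auto. apply exR; auto.
    apply exR; intros; apply cont_mult; [apply cF1; auto| apply cont_mult; [apply cont_cst| apply S_cont]].
    apply exR; intros; apply cont_mult; [apply cF1; auto| apply cont_mult; [apply cont_cst| apply C_cont]]. }
  rewrite K. unfold Ef. lra.
Qed.


Definition cF nu a x := 4*(a+nu)/(4*(x+nu)*((a-x)*(a-x))*sqrt(x+nu)*sqrt(a-x)).

Lemma F2_form nu a x : -nu < x < a -> F2 nu a x = (x - ((a+nu)/4 - nu)) * cF nu a x /\ 0 < cF nu a x.
Proof.
  intros [h1 h2]. unfold F2, cF.
  assert (p1 : 0 < x + nu) by lra. assert (p2 : 0 < a - x) by lra.
  assert (s1 := sqrt_lt_R0 _ p1). assert (s2 := sqrt_lt_R0 _ p2).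
  assert (D : 0 < 4*(x+nu)*((a-x)*(a-x))*sqrt(x+nu)*sqrt(a-x)) by (repeat apply Rmult_lt_0_compat; lra).
  split. field. lra. apply Rdiv_lt_0_compat; lra.
Qed.

Lemma sin_sq_lt t1 t2 : 0 <= t1 -> t1 < t2 -> t2 <= PI/2 -> S t1 < S t2.
Proof.
  intros. assert (0 <= sin t1). { apply sin_ge_0; lra. }
  assert (sin t1 < sin t2) by (apply sin_increasing_1; lra).
  unfold S. nra.
Qed.

Lemma S_pos t : 0 < t < PI/2 -> 0 < S t /\ 0 < C t.
Proof.
  intros. assert (0 < sin t) by (apply sin_gt_0; lra). assert (0 < cos t) by (apply cos_gt_0; lra).
  unfold S, C. split; nra.
Qed.

Lemma key nu a u b : -nu < b -> b < u -> u < a -> 4*(b+nu) < a+nu ->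
  0 <= Ef nu a u b -> 0 < J22f nu a u b.
Proof.
  intros h1 h2 h3 h4 HE. pose proof PI_RGT_0 as HPI.
  set (e0 := (a+nu)/4 - nu).
  set (s0 := (e0 - b)/(u - b)).
  assert (Hs0 : 0 < s0). { unfold s0, e0. apply Rdiv_lt_0_compat; lra. }
  assert (Heta : forall t, eta u b t - e0 = (u - b) * (S t - s0)).
  { intros t. unfold eta, s0. field. lra. }
  assert (HF : forall t, F2 nu a (eta u b t) = (u - b) * (S t - s0) * cF nu a (eta u b t) /\ 0 < cF nu a (eta u b t)).
  { intros t. destruct (eta_dom nu a u b t) as [Hd _]; auto.
    destruct (F2_form nu a _ Hd) as [E1 E2]. rewrite E1, Heta. split; auto. }
  destruct (Rlt_le_dec s0 1) as [Hs1|Hs1].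
  2:{ exfalso.
      assert (0 < RInt (fun t => -1 * (F2 nu a (eta u b t) * (S t * C t)) + 0 * 0) 0 (PI/2)).
      { apply RInt_gt_0. lra.
        - intros t Ht. destruct (S_pos t Ht) as [q1 q2]. destruct (HF t) as [E1 E2]. rewrite E1.
          assert (S t < 1) by (assert (H := SC1 t); lra).
          assert (0 < S t * C t) by nra.
          assert (0 < (u - b) * (s0 - S t) * cF nu a (eta u b t)) by (apply Rmult_lt_0_compat; [apply Rmult_lt_0_compat|]; lra).
          nra.
        - intros t _. apply cont_plus. apply cont_mult. apply cont_cst.
          apply cont_mult. apply cF2; auto. apply cont_mult. apply S_cont. apply C_cont. apply cont_mult; apply cont_cst. }
      rewrite RInt_lin in H. unfold Ef in HE. lra.
      apply exR. intros t. apply cont_mult. apply cF2; auto. apply cont_mult. apply S_cont. apply C_cont.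
      apply exR. intros; apply cont_cst. }
  set (th0 := asin (sqrt s0)).
  assert (Hsq : 0 < sqrt s0 < 1). { split. apply sqrt_lt_R0; lra. rewrite <- sqrt_1. apply sqrt_lt_1; lra. }
  assert (Hth : 0 < th0 < PI/2) by (apply asin_pos; auto).
  assert (Sth : S th0 = s0). { unfold S, th0. rewrite sin_asin by lra. simpl. rewrite Rmult_1_r, sqrt_sqrt; lra. }
  set (k := s0 / (1 - s0)).
  set (g := fun t => F2 nu a (eta u b t) * (S t * (S t - s0))).
  assert (cg : forall t, continuous g t).
  { intros t. unfold g. apply cont_mult. apply cF2; auto. apply cont_mult. apply S_cont.
    apply cont_plus. apply S_cont. apply cont_cst. }
  assert (gpos : forall t, 0 <= g t).
  { intros t. unfold g. destruct (HF t) as [E1 E2]. rewrite E1. assert (Hs := S01 t).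
    assert (0 <= (S t - s0) * (S t - s0)) by apply Rle_0_sqr.
    assert (0 <= (u - b) * cF nu a (eta u b t)) by (apply Rmult_le_pos; lra).
    replace ((u - b) * (S t - s0) * cF nu a (eta u b t) * (S t * (S t - s0))) with
      (((u - b) * cF nu a (eta u b t)) * (S t * ((S t - s0) * (S t - s0)))) by ring.
    apply Rmult_le_pos; auto. apply Rmult_le_pos; lra. }
  assert (Qpos : 0 < RInt g 0 (PI/2)).
  { rewrite <- (RInt_plusR g 0 th0 (PI/2)) by (apply exR; auto).
    assert (0 <= RInt g 0 th0) by (apply RInt_ge_0; [lra| apply exR; auto| intros; auto]).
    assert (0 < RInt g th0 (PI/2)).
    { apply RInt_gt_0. lra. 2: intros; auto.
      intros t Ht. unfold g. destruct (HF t) as [E1 E2]. rewrite E1.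
      assert (s0 < S t) by (rewrite <- Sth; apply sin_sq_lt; lra).
      assert (0 < S t) by lra.
      replace ((u - b) * (S t - s0) * cF nu a (eta u b t) * (S t * (S t - s0))) with
        (((u - b) * cF nu a (eta u b t)) * (S t * ((S t - s0) * (S t - s0)))) by ring.
      apply Rmult_lt_0_compat. apply Rmult_lt_0_compat; lra. apply Rmult_lt_0_compat; nra. }
    lra. }
  assert (EJ : J22f nu a u b = (2*k) * Ef nu a u b + (2/(1-s0)) * RInt g 0 (PI/2)).
  { unfold J22f, Ef. rewrite <- RInt_lin.
    apply RInt_ext. intros t _. unfold g, k.
    assert (HC : C t = 1 - S t) by (assert (H := SC1 t); lra). rewrite HC.
    change (@eq R (F2 nu a (eta u b t) * (2 * S t * S t)) (2 * (s0 / (1 - s0)) * (F2 nu a (eta u b t) * (S t * (1 - S t))) +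
      2 / (1 - s0) * (F2 nu a (eta u b t) * (S t * (S t - s0))))).
    field. lra.
    apply exR. intros t. apply cont_mult. apply cF2; auto. apply cont_mult. apply S_cont. apply C_cont.
    apply exR; auto. }
  rewrite EJ.
  assert (0 <= 2 * k) by (unfold k; apply Rmult_le_pos; [lra| apply Rlt_le, Rdiv_lt_0_compat; lra]).
  assert (0 < 2 / (1 - s0)) by (apply Rdiv_lt_0_compat; lra).
  nra.
Qed.

Lemma sin_le_id x : 0 <= x -> sin x <= x.
Proof.
  intros Hx.
  destruct (MVT_gen sin 0 x cos) as [c [Hc E]].
  - intros y _. auto_derive. exact I. ring.
  - intros y _. apply pt_of_cont, cont_sin.
  - rewrite sin_0 in E. assert (H := COS_bound c). nra.
Qed.

Lemma F1_pos nu a y : -nu < y < a -> 0 < F1 nu a y.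
Proof.
  intros [h1 h2]. unfold F1.
  assert (s1 := sqrt_lt_R0 (y+nu) ltac:(lra)). assert (s2 := sqrt_lt_R0 (a-y) ltac:(lra)).
  apply Rdiv_lt_0_compat. lra. repeat apply Rmult_lt_0_compat; lra.
Qed.
Lemma Fh_pos nu a y : -nu < y < a -> 0 < Fh nu a y.
Proof.
  intros [h1 h2]. unfold Fh.
  assert (s1 := sqrt_lt_R0 (y+nu) ltac:(lra)). assert (s2 := sqrt_lt_R0 (a-y) ltac:(lra)).
  apply Rdiv_lt_0_compat; lra.
Qed.

Lemma J_pos nu a u v : -nu < v -> v < u -> u < a -> 0 < Jf nu a u v.
Proof.
  intros. pose proof PI_RGT_0. unfold Jf. apply RInt_gt_0. lra.
  intros t _. destruct (eta_dom nu a u v t) as [Hd _]; auto. assert (H' := Fh_pos nu a _ Hd). lra.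
  intros t _. apply cont_mult. apply cFh; auto. apply cont_cst.
Qed.
Lemma J2_pos nu a u v : -nu < v -> v < u -> u < a -> 0 < J2f nu a u v.
Proof.
  intros. pose proof PI_RGT_0. unfold J2f. apply RInt_gt_0. lra.
  intros t Ht. destruct (eta_dom nu a u v t) as [Hd _]; auto. assert (H' := F1_pos nu a _ Hd).
  destruct (S_pos t Ht). nra.
  intros t _. apply cont_mult. apply cF1; auto. apply cont_mult. apply cont_cst. apply S_cont.
Qed.
Lemma J3_pos nu a u v : -nu < v -> v < u -> u < a -> 0 < J3f nu a u v.
Proof.
  intros. pose proof PI_RGT_0. unfold J3f. apply RInt_gt_0. lra.
  intros t Ht. destruct (eta_dom nu a u v t) as [Hd _]; auto. assert (H' := F1_pos nu a _ Hd).
  destruct (S_pos t Ht). nra.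
  intros t _. apply cont_mult. apply cF1; auto. apply cont_mult. apply cont_cst. apply C_cont.
Qed.

Lemma div_le p q r s : 0 < q -> 0 < s -> p * s <= r * q -> p / q <= r / s.
Proof.
  intros hq hs H. apply Rmult_le_reg_r with (q * s). nra.
  replace (p / q * (q * s)) with (p * s) by (field; lra).
  replace (r / s * (q * s)) with (r * q) by (field; lra). exact H.
Qed.

Lemma RInt_le_const (f : R -> R) a b c : a <= b -> ex_RInt f a b -> (forall t, a < t < b -> f t <= c) ->
  RInt f a b <= (b - a) * c.
Proof.
  intros hab hf H. eapply Rle_trans. apply RInt_le with (g := fun _ => c); auto.
  apply (ex_RInt_const (V:=R_CompleteNormedModule)).
  right. rewrite (RInt_const (V:=R_CompleteNormedModule)). reflexivity.
Qed.

Lemma RInt_ge_const (f : R -> R) a b c : a <= b -> ex_RInt f a b -> (forall t, a < t < b -> c <= f t) ->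
  (b - a) * c <= RInt f a b.
Proof.
  intros hab hf H. eapply Rle_trans. 2: apply RInt_le with (f := fun _ => c); auto.
  right. rewrite (RInt_const (V:=R_CompleteNormedModule)). reflexivity.
  apply (ex_RInt_const (V:=R_CompleteNormedModule)).
Qed.

Lemma eta_Q a u b t : a - eta u b t = (a - u) + (u - b) * C t.
Proof. unfold eta. assert (H := SC1 t). replace (S t) with (1 - C t) by lra. ring. Qed.

Lemma J3_upper nu a u b : -nu < b -> b < u -> u < a ->
  J3f nu a u b <= (PI/2 - 0) * ((a+nu) / (sqrt (b+nu) * (u-b) * sqrt (a-u))).
Proof.
  intros h1 h2 h3. pose proof PI_RGT_0. unfold J3f. apply RInt_le_const. lra.
  apply exR. intros t. apply cont_mult. apply cF1; auto. apply cont_mult. apply cont_cst. apply C_cont.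
  intros t _. destruct (eta_dom nu a u b t) as [[d1 d2] [e1 e2]]; auto.
  assert (HQ := eta_Q a u b t). assert (HC := C01 t).
  set (e := eta u b t) in *.
  assert (p1 : 0 < e + nu) by lra. assert (p2 : 0 < a - e) by lra.
  assert (s1 := sqrt_lt_R0 _ p1). assert (s2 := sqrt_lt_R0 _ p2).
  assert (s3 := sqrt_lt_R0 (b+nu) ltac:(lra)). assert (s4 := sqrt_lt_R0 (a-u) ltac:(lra)).
  assert (m1 : sqrt (b+nu) <= sqrt (e+nu)) by (apply sqrt_le_1; lra).
  assert (m2 : sqrt (a-u) <= sqrt (a-e)) by (apply sqrt_le_1; lra).
  unfold F1.
  replace ((a + nu) / (2 * sqrt (e + nu) * sqrt (a - e) * (a - e)) * (2 * C t))
    with (((a + nu) * C t) / (sqrt (e + nu) * sqrt (a - e) * (a - e))) by (field; repeat split; lra).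
  apply div_le. repeat apply Rmult_lt_0_compat; lra. repeat apply Rmult_lt_0_compat; lra.
  assert (X : sqrt (b + nu) * ((u - b) * C t) * sqrt (a - u) <= sqrt (e + nu) * (a - e) * sqrt (a - e)).
  { apply Rmult_le_compat; try lra. apply Rmult_le_pos; nra. apply Rmult_le_compat; nra. }
  replace ((a + nu) * C t * (sqrt (b + nu) * (u - b) * sqrt (a - u))) with ((a+nu) * (sqrt (b + nu) * ((u - b) * C t) * sqrt (a - u))) by ring.
  replace ((a + nu) * (sqrt (e + nu) * sqrt (a - e) * (a - e))) with ((a+nu) * (sqrt (e + nu) * (a - e) * sqrt (a - e))) by ring.
  apply Rmult_le_compat_l; lra.
Qed.

Lemma J2_lower nu a u b : -nu < b -> b < u -> u < a -> a - u <= 1/4 ->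
  sqrt (a+nu) / (2 * (1 + (a-b)) * sqrt (1 + (a-b)) * (a - u)) <= J2f nu a u b.
Proof.
  intros h1 h2 h3 h4. pose proof PI2_1.
  set (ep := a - u). set (K := 1 + (a - b)). set (A := a + nu).
  set (de := sqrt ep).
  assert (hep : 0 < ep) by (unfold ep; lra). assert (h4p : ep <= 1/4) by (unfold ep; lra).
  assert (hde : 0 < de) by (apply sqrt_lt_R0; lra).
  assert (hde2 : de <= 1/2).
  { unfold de. replace (1/2) with (sqrt (1/4)). apply sqrt_le_1; lra.
    apply sqrt_lem_1; lra. }
  assert (dd : de * de = ep) by (apply sqrt_sqrt; lra).
  assert (hK : 1 < K) by (unfold K; lra).
  assert (sA := sqrt_lt_R0 A ltac:(unfold A; lra)).
  assert (sK := sqrt_lt_R0 K ltac:(lra)).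
  assert (sAA : sqrt A * sqrt A = A) by (apply sqrt_sqrt; unfold A; lra).
  assert (sKK : sqrt K * sqrt K = K) by (apply sqrt_sqrt; lra).
  set (c0 := A / (2 * sqrt A * (de * sqrt K) * (ep * K))).
  unfold J2f.
  assert (ex1 : forall p q, ex_RInt (fun t => F1 nu a (eta u b t) * (2 * S t)) p q).
  { intros. apply exR. intros t. apply cont_mult. apply cF1; auto. apply cont_mult. apply cont_cst. apply S_cont. }
  rewrite <- (RInt_plusR _ 0 (PI/2 - de) (PI/2)) by auto.
  assert (B1 : 0 <= RInt (fun t => F1 nu a (eta u b t) * (2 * S t)) 0 (PI/2 - de)).
  { apply RInt_ge_0. lra. auto. intros t _. destruct (eta_dom nu a u b t) as [Hd _]; auto.
    assert (H' := F1_pos nu a _ Hd). assert (H'' := S01 t). nra. }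
  assert (B2 : (PI/2 - (PI/2 - de)) * c0 <= RInt (fun t => F1 nu a (eta u b t) * (2 * S t)) (PI/2 - de) (PI/2)).
  { apply RInt_ge_const. lra. auto.
    intros t Ht. destruct (eta_dom nu a u b t) as [[d1 d2] [e1 e2]]; auto.
    assert (HQ := eta_Q a u b t). fold ep in HQ.
    assert (HS : 1/2 <= S t).
    { assert (sin (PI/4) <= sin t) by (apply sin_incr_1; lra).
      rewrite sin_PI4 in H0. unfold S.
      assert (s2 := sqrt_lt_R0 2 ltac:(lra)). assert (s22 : sqrt 2 * sqrt 2 = 2) by (apply sqrt_sqrt; lra).
      assert (0 < 1 / sqrt 2) by (apply Rdiv_lt_0_compat; lra).
      assert (X2 : (1 / sqrt 2) * (1/ sqrt 2) = 1/(sqrt 2 * sqrt 2)) by (field; lra). rewrite s22 in X2.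
      simpl. nra. }
    assert (HC : C t <= ep).
    { unfold C. rewrite <- sin_shift.
      assert (0 <= sin (PI/2 - t)) by (apply sin_ge_0; lra).
      assert (sin (PI/2 - t) <= PI/2 - t) by (apply sin_le_id; lra).
      simpl. nra. }
    assert (HC0 := C01 t).
    set (e := eta u b t) in *.
    assert (p1 : 0 < e + nu) by lra. assert (p2 : 0 < a - e) by lra.
    assert (s1 := sqrt_lt_R0 _ p1). assert (s2 := sqrt_lt_R0 _ p2).
    assert (HQK : a - e <= ep * K) by (unfold K; rewrite HQ; nra).
    assert (m1 : sqrt (e + nu) <= sqrt A) by (apply sqrt_le_1; unfold A; lra).
    assert (m2 : sqrt (a - e) <= de * sqrt K).
    { unfold de. rewrite <- sqrt_mult by lra. apply sqrt_le_1; lra. }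
    assert (F1b : c0 <= F1 nu a e).
    { unfold c0, F1. fold A. apply div_le. repeat apply Rmult_lt_0_compat; lra. repeat apply Rmult_lt_0_compat; lra.
      apply Rmult_le_compat_l. unfold A; lra.
      apply Rmult_le_compat; try lra. repeat apply Rmult_le_pos; lra.
      apply Rmult_le_compat; try lra. }
    assert (0 < c0) by (unfold c0; apply Rdiv_lt_0_compat; [unfold A; lra| repeat apply Rmult_lt_0_compat; lra]).
    nra. }
  assert (Eq : (PI/2 - (PI/2 - de)) * c0 = sqrt A / (2 * K * sqrt K * ep)).
  { unfold c0. rewrite <- sAA at 1. field. repeat split; lra. }
  rewrite Eq in B2. lra.
Qed.

Lemma Fh_F1 nu a e : -nu < e < a -> Fh nu a e = F1 nu a e * (2 * (e + nu) * (a - e) / (a + nu)).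
Proof.
  intros [h1 h2]. unfold Fh, F1.
  assert (p1 : 0 < e + nu) by lra. assert (p2 : 0 < a - e) by lra.
  assert (s1 := sqrt_lt_R0 _ p1). assert (s2 := sqrt_lt_R0 _ p2).
  assert (e1 := sqrt_sqrt _ (Rlt_le _ _ p1)).
  set (q1 := sqrt (e + nu)) in *. set (q2 := sqrt (a - e)) in *.
  rewrite <- e1. field. repeat split; lra.
Qed.

Lemma J_upper nu a u b dd : -nu < b -> b < u -> u < a -> 0 < dd -> dd <= (u - b)/2 ->
  Jf nu a u b <= 4 * dd * J2f nu a u b + 1 * ((PI/2 - 0) * (2 * sqrt (a+nu) / sqrt dd)).
Proof.
  intros h1 h2 h3 hd hd2. pose proof PI_RGT_0.
  set (A := a + nu).
  assert (sA := sqrt_lt_R0 A ltac:(unfold A; lra)).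
  assert (sd := sqrt_lt_R0 dd hd).
  set (c := 2 * sqrt A / sqrt dd).
  assert (hc : 0 < c) by (unfold c; apply Rdiv_lt_0_compat; lra).
  unfold Jf, J2f.
  replace ((PI/2 - 0) * c) with (RInt (fun _ => c) 0 (PI/2)) by (rewrite (RInt_const (V:=R_CompleteNormedModule)); reflexivity).
  rewrite <- RInt_lin.
  2:{ apply exR. intros t. apply cont_mult. apply cF1; auto. apply cont_mult. apply cont_cst. apply S_cont. }
  2:{ apply (ex_RInt_const (V:=R_CompleteNormedModule)). }
  apply RInt_le. lra.
  apply exR. intros t. apply cont_mult. apply cFh; auto. apply cont_cst.
  apply exR. intros t. apply cont_plus. apply cont_mult. apply cont_cst.
  apply cont_mult. apply cF1; auto. apply cont_mult. apply cont_cst. apply S_cont.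
  apply cont_mult; apply cont_cst.
  intros t _. destruct (eta_dom nu a u b t) as [[d1 d2] [e1 e2]]; auto.
  assert (HQ := eta_Q a u b t). assert (HC := C01 t). assert (HSC := SC1 t).
  assert (HF1 := F1_pos nu a (eta u b t) ltac:(lra)).
  set (e := eta u b t) in *.
  assert (p1 : 0 < e + nu) by lra. assert (p2 : 0 < a - e) by lra.
  assert (s1 := sqrt_lt_R0 _ p1). assert (s2 := sqrt_lt_R0 _ p2).
  assert (HS0 := S01 t).
  assert (T1 : 0 <= 4 * dd * (F1 nu a e * (2 * S t))) by (apply Rmult_le_pos; nra).
  destruct (Rlt_le_dec (a - e) dd) as [Hq|Hq].
  - assert (HS : 1/2 <= S t).
    { assert ((u - b) * C t < (u - b) / 2) by lra.
      assert (C t < 1/2). { apply Rmult_lt_reg_l with (u - b). lra. lra. } lra. }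
    rewrite Fh_F1 by lra. fold A.
    assert (2 * (e + nu) * (a - e) / A <= 2 * dd).
    { apply Rmult_le_reg_r with A. unfold A; lra. unfold Rdiv. rewrite Rmult_assoc, Rinv_l by (unfold A; lra).
      assert (e + nu <= A) by (unfold A; lra). nra. }
    change (@Rle (F1 nu a e * (2 * (e + nu) * (a - e) / A) * 2) (4 * dd * (F1 nu a e * (2 * S t)) + 1 * c)).
    assert (F1 nu a e * (2 * (e + nu) * (a - e) / A) <= F1 nu a e * (2 * dd)) by (apply Rmult_le_compat_l; lra).
    assert (F1 nu a e * 1 <= F1 nu a e * (2 * S t)) by (apply Rmult_le_compat_l; lra).
    assert (0 <= 1 * c) by lra.
    nra.
  - unfold Fh.
    assert (m1 : sqrt (e + nu) <= sqrt A) by (apply sqrt_le_1; unfold A; lra).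
    assert (m2 : sqrt dd <= sqrt (a - e)) by (apply sqrt_le_1; lra).
    assert (sqrt (e + nu) / sqrt (a - e) * 2 <= c).
    { unfold c. replace (sqrt (e + nu) / sqrt (a - e) * 2) with (2 * sqrt (e + nu) / sqrt (a - e)) by (field; lra).
      apply div_le; try lra. nra. }
    change (@Rle (sqrt (e + nu) / sqrt (a - e) * 2) (4 * dd * (F1 nu a e * (2 * S t)) + 1 * c)).
    lra.
Qed.

Lemma loc_int (x lo hi : R) : lo < x < hi -> locally x (fun y => lo < y < hi).
Proof.
  intros H. assert (Hr : 0 < Rmin (x - lo) (hi - x)) by (apply Rmin_glb_lt; lra).
  exists (mkposreal _ Hr). intros y Hy. apply ballR' in Hy. simpl in Hy.
  assert (m1 := Rmin_l (x - lo) (hi - x)). assert (m2 := Rmin_r (x - lo) (hi - x)).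
  apply Rabs_lt_between in Hy. lra.
Qed.

Lemma dI2_eq nu a u b : -nu < b -> b < u -> u < a -> dI2 nu a u b = J2f nu a u b.
Proof.
  intros h1 h2 h3. unfold dI2.
  rewrite (Derive_ext_loc _ (fun v => Jf nu a v b)).
  apply is_derive_unique. apply J_du; lra.
  eapply filter_imp. 2: apply (loc_int u b a); lra.
  intros y Hy. apply Ifun_J; lra.
Qed.

Lemma dI3_eq nu a u b : -nu < b -> b < u -> u < a -> dI3 nu a u b = J3f nu a u b.
Proof.
  intros h1 h2 h3. unfold dI3.
  rewrite (Derive_ext_loc _ (fun v => Jf nu a u v)).
  apply is_derive_unique. apply J_dv; lra.
  eapply filter_imp. 2: apply (loc_int b (-nu) u); lra.
  intros y Hy. apply Ifun_J; lra.
Qed.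

Definition Lam nu a b u := a + u + b + 2 * nu - Jf nu a u b / J2f nu a u b.

Lemma lam2_eq nu a u b : -nu < b -> b < u -> u < a -> lambda2 nu a u b = Lam nu a b u.
Proof. intros. unfold lambda2, Lam. rewrite dI2_eq, Ifun_J; auto. Qed.

Lemma lam3_eq nu a u b : -nu < b -> b < u -> u < a ->
  lambda3 nu a u b = a + u + b + 2 * nu - Jf nu a u b / J3f nu a u b.
Proof. intros. unfold lambda3. rewrite dI3_eq, Ifun_J; auto. Qed.

Lemma lam23 nu a u b : -nu < b -> b < u -> u < a ->
  (lambda2 nu a u b = lambda3 nu a u b <-> J2f nu a u b = J3f nu a u b).
Proof.
  intros h1 h2 h3. rewrite lam2_eq, lam3_eq by auto. unfold Lam.
  assert (p := J_pos nu a u b h1 h2 h3). assert (p2 := J2_pos nu a u b h1 h2 h3).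
  assert (p3 := J3_pos nu a u b h1 h2 h3).
  split; intros E.
  - assert (Jf nu a u b / J2f nu a u b = Jf nu a u b / J3f nu a u b) by lra.
    apply Rmult_eq_reg_l with (Jf nu a u b / (J2f nu a u b * J3f nu a u b)).
    replace (Jf nu a u b / (J2f nu a u b * J3f nu a u b) * J2f nu a u b) with (Jf nu a u b / J3f nu a u b) by (field; lra).
    replace (Jf nu a u b / (J2f nu a u b * J3f nu a u b) * J3f nu a u b) with (Jf nu a u b / J2f nu a u b) by (field; lra).
    lra. apply Rgt_not_eq. apply Rdiv_lt_0_compat; nra.
  - rewrite E. reflexivity.
Qed.

Lemma Lam_deriv nu a b u : -nu < b -> b < u -> u < a ->
  is_derive (Lam nu a b) u (Jf nu a u b * J22f nu a u b / (J2f nu a u b * J2f nu a u b)).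
Proof.
  intros h1 h2 h3. unfold Lam.
  assert (d1 := J_du nu a u b ltac:(lra) ltac:(lra)).
  assert (d2 := J2_du nu a u b ltac:(lra) ltac:(lra)).
  assert (p2 := J2_pos nu a u b h1 h2 h3).
  assert (d3 := is_derive_div _ _ u _ _ d1 d2 ltac:(lra)).
  eapply is_derive_Req.
  apply (is_derive_minus (fun u => a + u + b + 2 * nu) (fun u => Jf nu a u b / J2f nu a u b)).
  auto_derive. exact I. reflexivity. exact d3.
  change (@eq R (1 - ((J2f nu a u b * J2f nu a u b - Jf nu a u b * J22f nu a u b) / (J2f nu a u b ^ 2)))
   (Jf nu a u b * J22f nu a u b / (J2f nu a u b * J2f nu a u b))).
  field. lra.
Qed.

Lemma D_pos_near nu a b u1 : -nu < b -> b < u1 -> u1 < a ->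
  exists w, u1 < w < a /\ 0 < J2f nu a w b - J3f nu a w b.
Proof.
  intros h1 h2 h3. pose proof PI_RGT_0.
  set (A := a + nu). set (K := 1 + (a - b)). set (x1 := u1 - b).
  assert (sA := sqrt_lt_R0 A ltac:(unfold A; lra)).
  assert (sK := sqrt_lt_R0 K ltac:(unfold K; lra)).
  assert (sb := sqrt_lt_R0 (b + nu) ltac:(lra)).
  set (c1 := sqrt A / (2 * K * sqrt K)).
  set (c2 := (PI/2 - 0) * (A / (sqrt (b + nu) * x1))).
  assert (hK : 0 < K) by (unfold K; lra). assert (hA : 0 < A) by (unfold A; lra). assert (hx1 : 0 < x1) by (unfold x1; lra).
  assert (hc1 : 0 < c1). { unfold c1. apply Rdiv_lt_0_compat. lra. repeat apply Rmult_lt_0_compat; lra. }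
  assert (hc2 : 0 < c2). { unfold c2. apply Rmult_lt_0_compat. lra. apply Rdiv_lt_0_compat. lra. apply Rmult_lt_0_compat; lra. }
  set (r := c1 / (2 * c2)).
  assert (hr : 0 < r) by (unfold r; apply Rdiv_lt_0_compat; lra).
  set (ep := Rmin (Rmin ((a - u1)/2) (1/4)) (r * r)).
  assert (m1 := Rmin_l (Rmin ((a - u1)/2) (1/4)) (r * r)).
  assert (m2 := Rmin_r (Rmin ((a - u1)/2) (1/4)) (r * r)).
  assert (m3 := Rmin_l ((a - u1)/2) (1/4)). assert (m4 := Rmin_r ((a - u1)/2) (1/4)).
  fold ep in m1, m2.
  assert (hep : 0 < ep). { unfold ep. apply Rmin_glb_lt. apply Rmin_glb_lt; lra. nra. }
  set (w := a - ep).
  exists w. split. unfold w; split; lra.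
  assert (hw1 : b < w) by (unfold w; lra). assert (hw2 : w < a) by (unfold w; lra).
  assert (L := J2_lower nu a w b h1 hw1 hw2 ltac:(unfold w; lra)).
  assert (U := J3_upper nu a w b h1 hw1 hw2).
  replace (a - w) with ep in L, U by (unfold w; ring). fold A K in L. fold c1 in L.
  replace (sqrt A / (2 * K * sqrt K * ep)) with (c1 / ep) in L by (unfold c1; field; repeat split; lra).
  set (se := sqrt ep) in *.
  assert (hse : 0 < se) by (apply sqrt_lt_R0; lra).
  assert (see : se * se = ep) by (apply sqrt_sqrt; lra).
  assert (hse2 : se <= r).
  { unfold se. rewrite <- (sqrt_square r) by lra. apply sqrt_le_1; nra. }
  assert (U2 : J3f nu a w b <= c2 / se).
  { eapply Rle_trans. apply U. fold A.
    replace (c2 / se) with ((PI/2 - 0) * (A / (sqrt (b + nu) * x1 * se))) by (unfold c2; field; repeat split; lra).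
    apply Rmult_le_compat_l. lra.
    assert (hwb : x1 <= w - b) by (unfold x1, w; lra).
    apply div_le. repeat apply Rmult_lt_0_compat; lra. repeat apply Rmult_lt_0_compat; lra.
    apply Rmult_le_compat_l. lra. apply Rmult_le_compat_r. lra. apply Rmult_le_compat_l; lra. }
  assert (c2 / se < c1 / ep).
  { rewrite <- see. apply Rmult_lt_reg_r with (se * se). nra.
    replace (c2 / se * (se * se)) with (c2 * se) by (field; lra).
    replace (c1 / (se * se) * (se * se)) with c1 by (field; lra).
    assert (c2 * se <= c2 * r) by (apply Rmult_le_compat_l; lra).
    assert (c2 * r = c1 / 2) by (unfold r; field; lra). lra. }
  lra.
Qed.

Lemma Lam_near nu a b u1 xi : -nu < b -> b < u1 -> u1 < a -> xi < 2 * a + b + 2 * nu ->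
  exists w, u1 < w < a /\ xi < Lam nu a b w.
Proof.
  intros h1 h2 h3 hxi. pose proof PI_RGT_0.
  set (A := a + nu). set (K := 1 + (a - b)). set (x1 := u1 - b).
  set (g := 2 * a + b + 2 * nu - xi).
  assert (hg : 0 < g) by (unfold g; lra).
  assert (hK : 0 < K) by (unfold K; lra). assert (hA : 0 < A) by (unfold A; lra). assert (hx1 : 0 < x1) by (unfold x1; lra).
  assert (sA := sqrt_lt_R0 A hA). assert (sK := sqrt_lt_R0 K hK).
  set (c1 := sqrt A / (2 * K * sqrt K)).
  assert (hc1 : 0 < c1). { unfold c1. apply Rdiv_lt_0_compat. lra. repeat apply Rmult_lt_0_compat; lra. }
  set (dd := Rmin (g / 16) (x1 / 2)).
  assert (n1 := Rmin_l (g/16) (x1/2)). assert (n2 := Rmin_r (g/16) (x1/2)). fold dd in n1, n2.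
  assert (hdd : 0 < dd) by (unfold dd; apply Rmin_glb_lt; lra).
  assert (sd := sqrt_lt_R0 dd hdd).
  set (Cd := 1 * ((PI/2 - 0) * (2 * sqrt A / sqrt dd))).
  assert (hCd : 0 < Cd). { unfold Cd. rewrite Rmult_1_l. apply Rmult_lt_0_compat. lra. apply Rdiv_lt_0_compat; lra. }
  set (ep := Rmin (Rmin ((a - u1)/2) (1/4)) (Rmin (g/4) (g * c1 / (4 * Cd)))).
  assert (m1 := Rmin_l (Rmin ((a - u1)/2) (1/4)) (Rmin (g/4) (g * c1 / (4 * Cd)))).
  assert (m2 := Rmin_r (Rmin ((a - u1)/2) (1/4)) (Rmin (g/4) (g * c1 / (4 * Cd)))).
  assert (m3 := Rmin_l ((a - u1)/2) (1/4)). assert (m4 := Rmin_r ((a - u1)/2) (1/4)).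
  assert (m5 := Rmin_l (g/4) (g * c1 / (4 * Cd))). assert (m6 := Rmin_r (g/4) (g * c1 / (4 * Cd))).
  fold ep in m1, m2.
  assert (hq : 0 < g * c1 / (4 * Cd)) by (apply Rdiv_lt_0_compat; nra).
  assert (hep : 0 < ep). { unfold ep. apply Rmin_glb_lt; apply Rmin_glb_lt; lra. }
  set (w := a - ep).
  exists w. split. unfold w; split; lra.
  assert (hw1 : b < w) by (unfold w; lra). assert (hw2 : w < a) by (unfold w; lra).
  assert (L := J2_lower nu a w b h1 hw1 hw2 ltac:(unfold w; lra)).
  replace (a - w) with ep in L by (unfold w; ring). fold A K in L. fold c1 in L.
  replace (sqrt A / (2 * K * sqrt K * ep)) with (c1 / ep) in L by (unfold c1; field; repeat split; lra).
  assert (U := J_upper nu a w b dd h1 hw1 hw2 hdd ltac:(unfold x1, w in *; lra)).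
  fold A Cd in U.
  assert (pJ := J_pos nu a w b h1 hw1 hw2). assert (pJ2 := J2_pos nu a w b h1 hw1 hw2).
  assert (R1 : Jf nu a w b / J2f nu a w b <= 4 * dd + Cd / J2f nu a w b).
  { apply Rmult_le_reg_r with (J2f nu a w b). lra.
    replace (Jf nu a w b / J2f nu a w b * J2f nu a w b) with (Jf nu a w b) by (field; lra).
    replace ((4 * dd + Cd / J2f nu a w b) * J2f nu a w b) with (4 * dd * J2f nu a w b + Cd) by (field; lra).
    lra. }
  assert (R2 : Cd / J2f nu a w b <= Cd * ep / c1).
  { apply div_le. lra. lra.
    assert (Cd * (c1 / ep) <= Cd * J2f nu a w b) by (apply Rmult_le_compat_l; lra).
    replace (Cd * c1) with (Cd * (c1 / ep) * ep) by (field; lra). nra. }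
  assert (R3 : Cd * ep / c1 <= g / 4).
  { apply Rmult_le_reg_r with c1. lra. replace (Cd * ep / c1 * c1) with (Cd * ep) by (field; lra).
    assert (Cd * ep <= Cd * (g * c1 / (4 * Cd))) by (apply Rmult_le_compat_l; lra).
    replace (Cd * (g * c1 / (4 * Cd))) with (g / 4 * c1) in H0 by (field; lra). lra. }
  unfold Lam. unfold g in *. unfold w in *. lra.
Qed.

Theorem lemma4p6 (nu a b ustar : R)
  (Hb : 0 < b + nu) (Hba : b + nu < (a + nu) / 4)
  (Hus : b < ustar < a)
  (Heq : lambda2 nu a ustar b = lambda3 nu a ustar b)
  (Huniq : forall u, b < u < a -> lambda2 nu a u b = lambda3 nu a u b -> u = ustar) :
  let alpha := lambda2 nu a ustar b in
  exists g : R -> R,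
    (forall xi, alpha <= xi <= 2 * a + b + 2 * nu ->
       ustar <= g xi <= a /\ lambda2e nu a (g xi) b = xi /\
       (forall u2, ustar <= u2 <= a -> lambda2e nu a u2 b = xi -> u2 = g xi)) /\
    (forall xi1 xi2, alpha <= xi1 -> xi1 < xi2 -> xi2 <= 2 * a + b + 2 * nu ->
       g xi1 < g xi2).
Proof.
  intros alpha.
  assert (h1 : -nu < b) by lra.
  assert (h4 : 4 * (b + nu) < a + nu) by lra.
  set (L := 2 * a + b + 2 * nu).
  set (Df := fun u => J2f nu a u b - J3f nu a u b).
  assert (HD0 : Df ustar = 0).
  { unfold Df. apply (lam23 nu a ustar b h1 (proj1 Hus) (proj2 Hus)) in Heq. lra. }
  assert (Dcont : forall u, b < u < a -> continuity_pt Df u).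
  { intros u Hu. unfold Df. apply continuity_pt_minus.
    eapply deriv_cont. apply J2_du; lra.
    eapply deriv_cont. apply J3_du; lra. }
  assert (Dnn : forall u, ustar <= u < a -> 0 <= Df u).
  { intros u Hu. destruct (Req_dec u ustar) as [E|E]. subst u; lra.
    destruct (Rle_lt_dec 0 (Df u)) as [P|P]; auto. exfalso.
    destruct (D_pos_near nu a b u h1 ltac:(lra) ltac:(lra)) as [w [Hw Hwp]].
    destruct (Ranalysis5.IVT_interv Df u w) as [z [Hz Hz0]].
    - intros y Hy. apply Dcont. lra.
    - lra.
    - exact P.
    - exact Hwp.
    - assert (z = ustar). { apply Huniq. lra. apply lam23; try lra. unfold Df in Hz0. lra. }
      lra. }
  assert (J22p : forall u, ustar <= u < a -> 0 < J22f nu a u b).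
  { intros u Hu. apply key; try lra.
    assert (E := IBP nu a u b h1 ltac:(lra) ltac:(lra)).
    assert (X := Dnn u Hu). unfold Df in X.
    assert (0 <= 4 * (u - b) * Ef nu a u b) by lra.
    destruct (Rle_lt_dec 0 (Ef nu a u b)); auto. nra. }
  assert (LamD : forall u, ustar <= u < a -> 0 < Jf nu a u b * J22f nu a u b / (J2f nu a u b * J2f nu a u b)).
  { intros u Hu. assert (p1 := J_pos nu a u b h1 ltac:(lra) ltac:(lra)).
    assert (p2 := J2_pos nu a u b h1 ltac:(lra) ltac:(lra)). assert (p3 := J22p u Hu).
    apply Rdiv_lt_0_compat; nra. }
  assert (LamInc : forall p q, ustar <= p -> p < q -> q < a -> Lam nu a b p < Lam nu a b q).
  { intros p q hp hpq hq.
    destruct (MVT_gen (Lam nu a b) p q (fun u => Jf nu a u b * J22f nu a u b / (J2f nu a u b * J2f nu a u b)))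
      as [c [Hc E]].
    - intros x Hx. rewrite Rmin_left, Rmax_right in Hx by lra. apply Lam_deriv; lra.
    - intros x Hx. rewrite Rmin_left, Rmax_right in Hx by lra. eapply deriv_cont. apply Lam_deriv; lra.
    - rewrite Rmin_left, Rmax_right in Hc by lra.
      assert (X := LamD c ltac:(lra)). nra. }
  assert (LamL : forall u, b < u < a -> Lam nu a b u < L).
  { intros u Hu. unfold Lam, L.
    assert (p1 := J_pos nu a u b h1 ltac:(lra) ltac:(lra)).
    assert (p2 := J2_pos nu a u b h1 ltac:(lra) ltac:(lra)).
    assert (0 < Jf nu a u b / J2f nu a u b) by (apply Rdiv_lt_0_compat; lra). lra. }
  assert (Ea : lambda2e nu a a b = L).
  { unfold lambda2e, L. destruct (Req_EM_T a a); [reflexivity| congruence]. }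
  assert (Eu : forall u, ustar <= u < a -> lambda2e nu a u b = Lam nu a b u).
  { intros u Hu. unfold lambda2e. destruct (Req_EM_T u a). lra. apply lam2_eq; lra. }
  assert (Halpha : alpha = Lam nu a b ustar) by (apply lam2_eq; lra).
  assert (EInc : forall p q, ustar <= p -> p < q -> q <= a -> lambda2e nu a p b < lambda2e nu a q b).
  { intros p q hp hpq hq. rewrite (Eu p) by lra.
    destruct (Req_dec q a) as [Eq|Eq].
    - subst q. rewrite Ea. apply LamL; lra.
    - rewrite (Eu q) by lra. apply LamInc; lra. }
  assert (Ex : forall xi, alpha <= xi <= L -> exists u, ustar <= u <= a /\ lambda2e nu a u b = xi).
  { intros xi [hx1 hx2].
    destruct (Req_dec xi L) as [E|E]. { exists a. split. lra. rewrite Ea; auto. }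
    destruct (Req_dec xi alpha) as [E2|E2]. { exists ustar. split. lra. rewrite Eu by lra. rewrite E2, Halpha. reflexivity. }
    destruct (Lam_near nu a b ustar xi h1 ltac:(lra) ltac:(lra) ltac:(unfold L in *; lra)) as [w [Hw Hwx]].
    destruct (Ranalysis5.IVT_interv (fun u => Lam nu a b u - xi) ustar w) as [z [Hz Hz0]].
    - intros y Hy. apply continuity_pt_minus. eapply deriv_cont. apply Lam_deriv; lra.
      apply continuity_pt_const. intros ??; reflexivity.
    - lra.
    - simpl. lra.
    - simpl. lra.
    - exists z. split. lra. rewrite Eu by lra. simpl in Hz0. lra. }
  set (P := fun xi u => ustar <= u <= a /\ lambda2e nu a u b = xi).
  exists (fun xi => epsilon (inhabits 0) (P xi)).
  assert (Spec : forall xi, alpha <= xi <= L -> P xi (epsilon (inhabits 0) (P xi))).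
  { intros xi Hxi. apply epsilon_spec. apply Ex; auto. }
  assert (Inj : forall p q, ustar <= p <= a -> ustar <= q <= a -> lambda2e nu a p b = lambda2e nu a q b -> p = q).
  { intros p q hp hq E. destruct (Rtotal_order p q) as [H|[H|H]]; auto.
    - assert (X := EInc p q ltac:(lra) H ltac:(lra)). lra.
    - assert (X := EInc q p ltac:(lra) H ltac:(lra)). lra. }
  split.
  - intros xi Hxi. destruct (Spec xi Hxi) as [S1 S2]. split; [|split]; auto.
    intros u2 Hu2 E. apply Inj; auto. rewrite E, S2. reflexivity.
  - intros xi1 xi2 hx1 hx12 hx2.
    destruct (Spec xi1 ltac:(lra)) as [S1 S2]. destruct (Spec xi2 ltac:(lra)) as [T1 T2].
    set (g1 := epsilon (inhabits 0) (P xi1)) in *. set (g2 := epsilon (inhabits 0) (P xi2)) in *.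
    destruct (Rlt_le_dec g1 g2) as [H|H]; auto.
    destruct (Req_dec g1 g2) as [E|E]. rewrite E in S2. lra.
    assert (X := EInc g2 g1 ltac:(lra) ltac:(lra) ltac:(lra)). lra.
Qed.
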